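(* Let $R$ be a commutative ring with identity; for $a\in R$ let $\mathfrak{a}=aR$. The following statements are equivalent: (1) $R$ is reduced (has no nonzero nilpotent elements); (2) $a\Gamma_{a}(R)=0$ for all $a\in R$; (3) $(0:_R a)=(0:_R a^{k})$ for all $a\in R$ and all $k\in\mathbb{Z}^{+}$; (4) $\varinjlim_{k}\operatorname{Hom}_R(R/\mathfrak{a}^{k},R)\cong \operatorname{Hom}_R(R/\mathfrak{a},R)$ for all $a\in R$; (5) $\Gamma_{a}(R)\cong \operatorname{Hom}_R(R/\mathfrak{a},R)$ for all $a\in R$; (6) for all $a\in R$, $0\to \Gamma_{a}(R)\to R\to aR\to 0$ is a short exact sequence, where the first map is the inclusion and the second is $r\mapsto ar$.
   Context: For $a\in R$: $\Gamma_{a}(R)=\{r\in R \mid a^{k}r=0 \text{ for some } k\in\mathbb{Z}^{+}\}$, $a\Gamma_{a}(R)=\{ar \mid r\in \Gamma_a(R)\}$, and $(0:_R a^{k})=\{r\in R\mid a^{k}r=0\}$. *)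

(* Defs.v *)
From mathcomp Require Import all_boot all_algebra.
Set Implicit Arguments. Unset Strict Implicit. Unset Printing Implicit Defensive.
Import GRing.Theory.
Local Open Scope ring_scope.

Section Defs.
Variable R : comPzRingType.

Definition reduced : Prop := forall (x : R) (n : nat), x ^+ n = 0 -> x = 0.

Definition Gamma (a : R) (r : R) : Prop := exists k : nat, (0 < k)%N /\ a ^+ k * r = 0.

Definition ann (a : R) (k : nat) (r : R) : Prop := a ^+ k * r = 0.

Definition pow_ideal (a : R) (k : nat) (x : R) : Prop := exists y : R, x = a ^+ k * y.

(* A set-level presentation of an R-module: an ambient carrier with a
   (setoid) equality, zero, addition, scalar action, and a membership
   predicate cutting out the module. *)
Record Rmod := {
  car : Type;
  req : car -> car -> Prop;
  rzero : car;
  radd : car -> car -> car;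
  rscale : R -> car -> car;
  mem : car -> Prop }.

Definition Rmap (M N : Rmod) (f : car M -> car N) : Prop :=
  (forall x, mem x -> mem (f x)) /\
  (forall x y, mem x -> mem y -> req x y -> req (f x) (f y)) /\
  (forall x y, mem x -> mem y -> req (f (radd x y)) (radd (f x) (f y))) /\
  (forall (r : R) x, mem x -> req (f (rscale r x)) (rscale r (f x))).

Definition Riso (M N : Rmod) : Prop :=
  exists f : car M -> car N, Rmap f /\
    (forall x y, mem x -> mem y -> req (f x) (f y) -> req x y) /\
    (forall y, mem y -> exists2 x, mem x & req (f x) y).

Definition short_exact (A B C : Rmod) (f : car A -> car B) (g : car B -> car C)
  : Prop :=
  Rmap f /\ Rmap g /\
  (forall x y, mem x -> mem y -> req (f x) (f y) -> req x y) /\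
  (forall z, mem z -> exists2 y, mem y & req (g y) z) /\
  (forall y, mem y -> (req (g y) (rzero C) <-> exists2 x, mem x & req (f x) y)).

Definition subR (P : R -> Prop) : Rmod :=
  {| car := R; req := @eq R; rzero := 0; radd := +%R; rscale := *%R; mem := P |}.

(* Hom_R(R/I, R), identified (via the universal property of the quotient)
   with the R-linear maps R -> R vanishing on the ideal I; pointwise
   operations, extensional equality. *)
Definition hom_quot_mem (I : R -> Prop) (f : R -> R) : Prop :=
  (forall x y, f (x + y) = f x + f y) /\
  (forall r x, f (r * x) = r * f x) /\
  (forall x, I x -> f x = 0).

Definition HomQuot (I : R -> Prop) : Rmod :=
  {| car := R -> R;
     req := fun f g => forall x, f x = g x;
     rzero := fun _ => 0;
     radd := fun f g x => f x + g x;
     rscale := fun r f x => r * f x;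
     mem := hom_quot_mem I |}.

(* The transition map Hom_R(R/a^k R, R) -> Hom_R(R/a^m R, R) (k <= m) of the
   direct system: precomposition with the canonical projection
   R/a^m R -> R/a^k R; under the identification above (maps R -> R) this
   projection lifts to the identity of R. *)
Definition hom_trans (k m : nat) (f : R -> R) : R -> R := fun x => f x.

(* The direct limit  lim_k Hom_R(R/a^k R, R): pairs (k, f) with
   f in Hom_R(R/a^k R, R), identified when they agree at some later stage. *)
Definition HomLim (a : R) : Rmod :=
  {| car := (nat * (R -> R))%type;
     req := fun p q => exists m : nat, (p.1 <= m)%N /\ (q.1 <= m)%N /\
              forall x, hom_trans p.1 m p.2 x = hom_trans q.1 m q.2 x;
     rzero := (0%N, fun _ => 0);
     radd := fun p q => (maxn p.1 q.1,
                         fun x => hom_trans p.1 (maxn p.1 q.1) p.2 x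
                                + hom_trans q.1 (maxn p.1 q.1) q.2 x);
     rscale := fun r p => (p.1, fun x => r * p.2 x);
     mem := fun p => hom_quot_mem (pow_ideal a p.1) p.2 |}.

End Defs.

(* Main.v *)
Require Import Defs.
From mathcomp Require Import all_boot all_algebra.
Local Open Scope ring_scope.
Import GRing.Theory.

Lemma red_ann (R : comPzRingType) : reduced R ->
  forall (a r : R) k, a ^+ k * r = 0 -> a * r = 0.
Proof.
move=> red a r [|k] h.
  by move: h; rewrite expr0 mul1r => ->; rewrite mulr0.
apply: (red _ k.+1); rewrite exprMn [r ^+ _]exprS mulrA h mul0r //.
Qed.

Lemma s2_red (R : comPzRingType) :
  (forall (a r : R), Gamma a r -> a * r = 0) -> reduced R.
Proof.
move=> H x [|n] h.
  by move: h; rewrite expr0 => h; rewrite -[x]mulr1 h mulr0.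
have g : Gamma x 1 by exists n.+1; rewrite mulr1.
by have := H x 1 g; rewrite mulr1.
Qed.

Lemma nil_red (R : comPzRingType) :
  (forall (x : R) n, x ^+ n.+1 = 0 -> x = 0) -> reduced R.
Proof.
move=> H x [|n] h; last exact: H h.
by move: h; rewrite expr0 => h; rewrite -[x]mulr1 h mulr0.
Qed.

Lemma hom_one (R : comPzRingType) (I : R -> Prop) (h : R -> R) :
  hom_quot_mem I h -> forall t, h t = t * h 1.
Proof. by move=> [_ [hl _]] t; rewrite -hl mulr1. Qed.
Arguments hom_one {R I h}.
Arguments red_ann {R}.

Theorem mainTheorem3 (R : comPzRingType) :
  let s1 := reduced R in
  let s2 := forall (a r : R), Gamma a r -> a * r = 0 in
  let s3 := forall (a : R) (k : nat), (0 < k)%N ->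
              forall r : R, ann a 1 r <-> ann a k r in
  let s4 := forall a : R, Riso (HomLim a) (HomQuot (pow_ideal a 1)) in
  let s5 := forall a : R, Riso (subR (Gamma a)) (HomQuot (pow_ideal a 1)) in
  let s6 := forall a : R,
      short_exact (A := subR (Gamma a)) (B := subR (fun _ => True))
                  (C := subR (pow_ideal a 1)) (fun r => r) (fun r => a * r) in
  [/\ s1 <-> s2, s1 <-> s3, s1 <-> s4, s1 <-> s5 & s1 <-> s6].
Proof.
move=> s1 s2 s3 s4 s5 s6.
have h12 : s1 -> s2 by move=> red a r [k [_ hk]]; exact: red_ann red _ _ _ hk.
have h21 : s2 -> s1 by exact: s2_red.
split.
- by split.
- split.
    move=> red a k k0 r; rewrite /ann expr1; split => h.
      by case: k k0 h => [//|k] _ h; rewrite exprSr -mulrA h mulr0.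
    exact: red_ann red _ _ _ h.
  move=> H; apply: h21 => a r [k [k0 hk]].
  by have /(_ r) [_ /(_ hk)] := H a k k0; rewrite /ann expr1.
- split.
    move=> red a; exists (fun p => p.2); split.
      split.
        move=> [k g] /= hg; have hg' := hg; case: hg' => [ga [gl gv]].
        split => //; split => //.
        move=> x [y ->]; rewrite expr1 (hom_one hg) mulrAC.
        suff -> : a * g 1 = 0 by rewrite mul0r.
        apply: (red_ann red _ _ k); rewrite -(hom_one hg).
        by apply: gv; exists 1; rewrite mulr1.
      split; first by move=> [k f] [l g] _ _ [m [_ [_ e]]].
      by split.
    split; first by move=> [k f] [l g] _ _ /= e; exists (maxn k l); rewrite leq_maxl leq_maxr.
    by move=> h hm; exists (1%N, h) => //.
  move=> H; apply: nil_red => x n' hn; set n := n'.+1 in hn.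
  have [f [[fm [fe [fa fs]]] [finj _]]] := H x.
  have m1 : hom_quot_mem (pow_ideal x n) (fun t => t).
    by split => //; split => // t [y ->]; by rewrite /= hn mul0r.
  pose p1 : (nat * (R -> R))%type := (n, fun t => t).
  have mr : forall c, hom_quot_mem (pow_ideal x n) (fun t => c * t).
    move=> c; case: m1 => [ma [ml mv]]; split => /=.
      by move=> u v; rewrite mulrDr.
    split; first by move=> u v; rewrite mulrCA.
    by move=> t /mv ->; rewrite mulr0.
  have fp1 := fm p1 m1.
  have hf1 : forall t, x * f p1 t = 0.
    move=> t; case: fp1 => [_ [fl fv]].
    by rewrite -fl; apply: fv; exists t; rewrite expr1.
  have e : forall t, f (n, fun t => x * t) t = f (n, fun t => 0 * t) t.
    move=> t; rewrite (fs x p1 m1 t) (fs 0 p1 m1 t) /= hf1 mul0r //.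
  have [m [_ [_ em]]] := finj (n, fun t => x * t) (n, fun t => 0 * t) (mr x) (mr 0) e.
  by have := em 1; rewrite /hom_trans /= mulr1 mul0r.
- split.
    move=> red a; exists (fun r t => t * r); split.
      split.
        move=> r /= ga; split; first by move=> u v; rewrite mulrDl.
        split; first by move=> u v; rewrite mulrA.
        move=> t [y ->]; rewrite expr1 mulrAC.
        by rewrite (h12 red _ _ ga) mul0r.
      split; first by move=> ? ? _ _ -> .
      split; first by move=> u v _ _ t /=; rewrite mulrDr.
      by move=> c u _ t /=; rewrite mulrCA.
    split; first by move=> u v _ _ /= /(_ 1); rewrite !mul1r.
    move=> h hm; exists (h 1).
      exists 1%N; split => //; rewrite expr1 -(hom_one hm).
      by case: hm => [_ [_ hv]]; apply: hv; exists 1; rewrite mulr1.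
    by move=> t /=; rewrite -(hom_one hm).
  move=> H; apply: nil_red => x n' hn; set n := n'.+1 in hn.
  have [f [[fm [fe [fa fs]]] [finj _]]] := H x.
  have g1 : Gamma x 1 by exists n; rewrite mulr1 hn.
  have gc : forall c, Gamma x (c * 1) by move=> c; exists n; rewrite mulrCA mulr1 hn mulr0.
  have fp1 := fm _ g1.
  have hf1 : forall t, x * f 1 t = 0.
    move=> t; case: fp1 => [_ [fl fv]].
    by rewrite -fl; apply: fv; exists t; rewrite expr1.
  have e : forall t, f (x * 1) t = f (0 * 1) t.
    move=> t; rewrite (fs x 1 g1 t) (fs 0 1 g1 t) /= hf1 mul0r //.
  have := finj _ _ (gc x) (gc 0) e.
  by rewrite /= mulr1 mul0r.
- split.
    move=> red a; split.
      by split => //; split => //.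
    split.
      split; first by move=> y _; exists y; rewrite expr1.
      split; first by move=> ? ? _ _ ->.
      split; first by move=> u v _ _ /=; rewrite mulrDr.
      by move=> c u _ /=; rewrite mulrCA.
    split; first by [].
    split; first by move=> z [y ->]; exists y => //; rewrite expr1.
    move=> y _; split => /=.
      by move=> ay; exists y => //; exists 1%N; rewrite expr1.
    by move=> [u gu <-]; exact: h12 red _ _ gu.
  move=> H; apply: h21 => a r gr.
  have [_ [_ [_ [_ ex]]]] := H a.
  have [_ hb] := ex r I.
  apply: hb; exists r => //.
Qed.
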